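(* Let $X$ be a real reflexive Banach space and $f:X\to\mathbb{R}\cup\{+\infty\}$ a lower semicontinuous proper convex function, and let $f^{FY}(x,x^{\ast}):=f(x)+f^{\ast}(x^{\ast})$ on $X\times X^{\ast}$. Then for every $\epsilon\ge0$ and $x\in X$, $\partial_\epsilon f(x)=\breve{T}_{f^{FY}}(\epsilon,x)$, i.e. $\partial_\epsilon f(x)=\{x^{\ast}\in X^{\ast}:(x^{\ast},x)\in\partial_{2\epsilon}f^{FY}(x,x^{\ast})\}$.
   Context: $X^{\ast}$ is the dual of $X$ with pairing $\langle\cdot,\cdot\rangle$; $f^{\ast}(x^{\ast})=\sup_x\{\langle x,x^{\ast}\rangle-f(x)\}$. For $\epsilon\ge0$, $\partial_\epsilon f(x)=\{x^{\ast}: f(y)-f(x)\ge\langle y-x,x^{\ast}\rangle-\epsilon\ \forall y\in X\}$ if $f(x)<\infty$, and $\emptyset$ otherwise. The dual of $X\times X^{\ast}$ is identified with $X^{\ast}\times X$ via $\langle (x,x^{\ast}),(y^{\ast},y)\rangle=\langle x,y^{\ast}\rangle+\langle y,x^{\ast}\rangle$; for $g:X\times X^{\ast}\to\mathbb{R}\cup\{+\infty\}$ and $\eta\ge0$, $\partial_\eta g(z)$ is the set of $(y^{\ast},y)\in X^{\ast}\times X$ with $g(w,w^{\ast})\ge g(z)+\langle (w,w^{\ast})-z,(y^{\ast},y)\rangle-\eta$ for all $(w,w^{\ast})$ when $g(z)<\infty$, and $\emptyset$ otherwise. For such $g$, $\breve{T}_g(\epsilon,x):=\{x^{\ast}:(x^{\ast},x)\in\partial_{2\epsilon}g(x,x^{\ast})\}$.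 *)

(* Defs.v *)
From HB Require Import structures.
From mathcomp Require Import all_boot all_order all_algebra.
From mathcomp Require Import all_classical all_reals all_analysis.
Set Implicit Arguments. Unset Strict Implicit. Unset Printing Implicit Defensive.
Import Order.TTheory GRing.Theory Num.Theory.
Import numFieldNormedType.Exports.
Local Open Scope classical_set_scope.
Local Open Scope ring_scope.

Record dual (R : realType) (X : normedModType R) := Dual {
  dfun :> X -> R;
  dfun_linear : forall (a : R) (u v : X), dfun (a *: u + v) = a * dfun u + dfun v;
  dfun_cont : continuous dfun }.

(* Reflexivity: every bounded (= continuous) linear functional phi on the
   normed space X^* (dual norm ||x*|| = sup_{||u||<=1} |x*(u)|) is the
   evaluation at some x in X, i.e. the canonical embedding X -> X^** is onto. *)
Definition reflexive_space (R : realType) (X : normedModType R) : Prop :=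
  forall phi : dual X -> R,
    (forall (a : R) (s1 s2 s3 : dual X),
        (forall u, s3 u = a * s1 u + s2 u) -> phi s3 = a * phi s1 + phi s2) ->
    (exists C : R, forall s : dual X,
        (forall u, `|s u| <= `|u|) -> `|phi s| <= C) ->
    exists x : X, forall s : dual X, phi s = s x.

Local Open Scope ereal_scope.

Definition proper_fun (R : realType) (X : normedModType R) (f : X -> \bar R) :=
  (exists x, f x < +oo) /\ (forall x, f x != -oo).

Definition convex_fun (R : realType) (X : normedModType R) (f : X -> \bar R) :=
  forall (x y : X) (t : R), (0 < t)%R -> (t < 1)%R ->
    f (t *: x + (1 - t) *: y)%R <= t%:E * f x + (1 - t)%:E * f y.

Definition fconj (R : realType) (X : normedModType R) (f : X -> \bar R)
  (s : dual X) : \bar R :=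
  ereal_sup [set (s x)%:E - f x | x in setT].

Definition esubdiff (R : realType) (X : normedModType R) (f : X -> \bar R)
  (eps : R) (x : X) : set (dual X) :=
  [set s : dual X | f x < +oo /\ forall y : X, f y - f x >= ((s (y - x)%R) - eps)%:E].

(* eta-subdifferential of g : X x X^* -> \bar R at z, as a subset of X^* x X,
   using the pairing <(w,ws),(ys,y)> = ys(w) + ws(y). *)
Definition esubdiff2 (R : realType) (X : normedModType R)
  (g : X * dual X -> \bar R) (eta : R) (z : X * dual X) : set (dual X * X) :=
  [set p : dual X * X | g z < +oo /\
     forall w : X * dual X,
       g w >= g z + ((p.1 (w.1 - z.1)%R + (w.2 p.2 - z.2 p.2)) - eta)%:E].

Definition Tbreve (R : realType) (X : normedModType R)
  (g : X * dual X -> \bar R) (eps : R) (x : X) : set (dual X) :=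
  [set s : dual X | esubdiff2 g (2 * eps) (x, s) (s, x)].

Definition fFY (R : realType) (X : normedModType R) (f : X -> \bar R)
  (z : X * dual X) : \bar R := f z.1 + fconj f z.2.

(* Main.v *)
Require Import Defs.
From HB Require Import structures.
From mathcomp Require Import all_boot all_order all_algebra.
From mathcomp Require Import all_classical all_reals all_analysis.
From mathcomp Require Import ring lra.
Import Order.TTheory GRing.Theory Num.Theory.
Import numFieldNormedType.Exports.
Local Open Scope classical_set_scope.
Local Open Scope ring_scope.

Section HBsec.
Variables (R : realType) (V : lmodType R) (p : V -> R).
Hypothesis psub : forall u v, p (u + v) <= p u + p v.
Hypothesis phom : forall a u, 0 < a -> a * p u <= p (a *: u).
Hypothesis pge0 : forall u, 0 <= p u.

Definition lg (G : set (V * R)) :=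
  [/\ G (0, 0),
      (forall a u x v y, G (u, x) -> G (v, y) -> G (a *: u + v, a * x + y)),
      (forall u x y, G (u, x) -> G (u, y) -> x = y) &
      (forall u x, G (u, x) -> x <= p u)].

Lemma p0 : p 0 = 0.
Proof.
apply/eqP; rewrite eq_le pge0 andbT.
have h2 : (0:R) < 2 by lra.
have := @phom 2 0 h2; rewrite scaler0.
have := pge0 0; lra.
Qed.

Lemma ext_step (M : set (V * R)) (v : V) :
  lg M -> (forall x, ~ M (v, x)) ->
  exists c, lg [set z | exists u a t, M (u, a) /\ z = (u + t *: v, a + t * c)].
Proof.
move=> [M0 Mcl Mfun Mdom] vn.
pose S := [set z | exists u a, M (u, a) /\ z = a - p (u - v)].
have key u a w b : M (u, a) -> M (w, b) -> a - p (u - v) <= p (w + v) - b.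
  move=> Mu Mw; have := Mdom _ _ (Mcl 1 _ _ _ _ Mu Mw); rewrite scale1r mul1r.
  have := psub (u - v) (w + v).
  have -> : u - v + (w + v) = u + w by rewrite addrACA addNr addr0.
  lra.
have S0 : S !=set0 by exists (0 - p (0 - v)), 0, 0.
have Sub : has_sup S.
  split=> //; exists (p (0 + v) - 0) => z [u [a [Mu ->]]]; exact: key.
exists (sup S).
have c_ge u a : M (u, a) -> a - p (u - v) <= sup S.
  move=> Mu; apply: sup_upper_bound => //; by exists u, a.
have c_le w b : M (w, b) -> sup S <= p (w + v) - b.
  move=> Mw; apply: ge_sup => // z [u [a [Mu ->]]]; exact: key.
split.
- by exists 0, 0, 0; rewrite scale0r addr0 mul0r addr0.
- move=> a u x w y [u1 [a1 [t1 [M1 [-> ->]]]]] [u2 [a2 [t2 [M2 [-> ->]]]]].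
  exists (a *: u1 + u2), (a * a1 + a2), (a * t1 + t2); split; first exact: Mcl.
  congr pair.
    rewrite scalerDr scalerDl scalerA.
    by rewrite addrACA.
  by rewrite mulrDr mulrDl mulrA addrACA.
- move=> w x y [u1 [a1 [t1 [M1 [E1 ->]]]]] [u2 [a2 [t2 [M2 [E2 ->]]]]].
  have E : u1 + t1 *: v = u2 + t2 *: v by rewrite -E1 -E2.
  have [et|ne] := eqVneq t1 t2.
    subst t2; have Eu : u1 = u2 by apply: (addIr (t1 *: v)).
    subst u2; by rewrite (Mfun _ _ _ M1 M2).
  exfalso.
  have Mc := Mcl (t1 - t2)^-1 _ _ _ _ (Mcl (-1) _ _ _ _ M1 M2) M0.
  apply: (vn ((t1 - t2)^-1 * (-1 * a1 + a2) + 0)).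
  suff <- : (t1 - t2)^-1 *: (-1 *: u1 + u2) + 0 = v by [].
  have -> : -1 *: u1 + u2 = (t1 - t2) *: v.
    have -> : u2 = u1 + (t1 - t2) *: v by rewrite scalerBl addrA E addrK.
    by rewrite scaleN1r addrA addNr add0r.
  by rewrite addr0 scalerA mulVf ?scale1r // subr_eq0.
- move=> w x [u [a [t [Mu [-> ->]]]]].
  have [t0|t0|->] := ltgtP t 0; last first.
  + by rewrite scale0r mul0r !addr0; exact: Mdom.
  + have Mt : M (t^-1 *: u + 0, t^-1 * a + 0) by exact: Mcl.
    have := c_le _ _ Mt; rewrite !addr0 => h.
    have := @phom t (t^-1 *: u + v) t0.
    rewrite scalerDr scalerA mulfV ?gt_eqF // scale1r => h2.
    have h3 : t * sup S <= t * (p (t^-1 *: u + v) - t^-1 * a).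
      by rewrite ler_pM2l.
    move: h3; rewrite mulrBr mulrA mulfV ?gt_eqF // mul1r; lra.
  + set s := - t; have s0 : 0 < s by rewrite /s oppr_gt0.
    have Mt : M (s^-1 *: u + 0, s^-1 * a + 0) by exact: Mcl.
    have := c_ge _ _ Mt; rewrite !addr0 => h.
    have := @phom s (s^-1 *: u - v) s0.
    rewrite scalerDr scalerA mulfV ?gt_eqF // scale1r scalerN => h2.
    have h3 : s * (s^-1 * a - p (s^-1 *: u - v)) <= s * sup S.
      by rewrite ler_pM2l.
    move: h3; rewrite mulrBr mulrA mulfV ?gt_eqF // mul1r.
    have -> : u + t *: v = u - s *: v by rewrite /s scaleNr opprK.
    have -> : a + t * sup S = a - s * sup S by rewrite /s mulNr opprK.
    lra.
Qed.

Lemma hb (w0 : V) : 1 <= p w0 ->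
  exists L : V -> R, (forall a u v, L (a *: u + v) = a * L u + L v) /\
    (forall u, L u <= p u) /\ L w0 = 1.
Proof.
move=> pw0.
have w0n : w0 != 0 by apply/eqP => w00; move: pw0; rewrite w00 p0; lra.
pose G0 := [set z : V * R | exists t, z = (t *: w0, t)].
have lgG0 : lg G0.
  split.
  - by exists 0; rewrite scale0r.
  - move=> a u x v y [t1 [-> ->]] [t2 [-> ->]].
    by exists (a * t1 + t2); rewrite scalerDl scalerA.
  - move=> u x y [t1 [-> ->]] [t2 [Eu ->]].
    apply/eqP; rewrite -subr_eq0.
    have : (t1 - t2) *: w0 == 0 by rewrite scalerBl Eu subrr.
    by rewrite scaler_eq0 (negbTE w0n) orbF.
  - move=> u x [t [-> ->]].
    have [t0|t0] := ltP 0 t.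
      have := @phom t w0 t0; have : t <= t * p w0 by rewrite ler_peMr // ltW.
      lra.
    have := pge0 (t *: w0); lra.
pose P := [set G : set (V * R) | lg (G `|` G0)].
have chainP : forall F : set (set (V * R)), F `<=` P -> total_on F subset ->
    P (\bigcup_(X in F) X).
  move=> F FP Ftot.
  have pairH z1 z2 : ((\bigcup_(X in F) X) `|` G0) z1 ->
      ((\bigcup_(X in F) X) `|` G0) z2 ->
      exists H, [/\ lg H, H z1, H z2 & H `<=` (\bigcup_(X in F) X) `|` G0].
    have subU G : F G -> G `|` G0 `<=` (\bigcup_(X in F) X) `|` G0.
      by move=> FG z [Gz|G0z]; [left; exists G|right].
    move=> [[G1 FG1 G1z]|G0z1] [[G2 FG2 G2z]|G0z2].
    - have [G12|G21] := Ftot _ _ FG1 FG2.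
        exists (G2 `|` G0); split; [exact: FP|left; exact: G12|by left|exact: subU].
      exists (G1 `|` G0); split; [exact: FP|by left|left; exact: G21|exact: subU].
    - exists (G1 `|` G0); split; [exact: FP|by left|by right|exact: subU].
    - exists (G2 `|` G0); split; [exact: FP|by right|by left|exact: subU].
    - exists G0; split => //; by move=> z Gz; right.
  rewrite /P /=; split.
  - by right; case: lgG0.
  - move=> a u x v y U1 U2; have [H [[_ Hcl _ _] H1 H2 HU]] := pairH _ _ U1 U2.
    exact/HU/Hcl.
  - move=> u x y U1 U2; have [H [[_ _ Hf _] H1 H2 HU]] := pairH _ _ U1 U2.
    exact: Hf H1 H2.
  - move=> u x U1; have [H [[_ _ _ Hd] H1 H2 HU]] := pairH _ _ U1 U1.
    exact: Hd.
have [A [PA Amax]] := Zorn_bigcup chainP.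
set M := A `|` G0 in PA.
have Mtot v : exists x, M (v, x).
  have [//|nv] := pselect (exists x, M (v, x)).
  have vn : forall x, ~ M (v, x) by move=> x Mx; apply: nv; exists x.
  have [c lgB] := @ext_step M v PA vn.
  set B := [set z | _] in lgB.
  have MB : M `<=` B.
    by move=> [u a] Mz; exists u, a, 0; rewrite scale0r mul0r !addr0.
  exfalso; apply: (Amax B).
    rewrite properEneq; split; last by move=> z Az; apply: MB; left.
    apply/eqP => AB.
    have : B (v, c) by exists 0, 0, 1; split; [case: PA|rewrite scale1r mul1r !add0r].
    by rewrite -AB => Av; apply: (vn c); left.
  rewrite /P /=; have -> : B `|` G0 = B.
    by apply/setUidPl => z G0z; apply: MB; right.
  exact: lgB.
have [L HL] := choice Mtot.
case: PA => M0 Mcl Mfun Mdom.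
exists L; split; [|split].
- move=> a u v; apply: (Mfun _ _ _ (HL _)); exact: (Mcl a _ _ _ _ (HL u) (HL v)).
- move=> u; exact: Mdom (HL u).
- apply: (Mfun _ _ _ (HL w0)); right; exists 1; by rewrite scale1r.
Qed.

End HBsec.

Lemma comb_id (R : realType) (V : lmodType R) (l : R) (a b c d : V) :
  l *: a + (1 - l) *: b - (l *: c + (1 - l) *: d) =
  l *: (a - c) + (1 - l) *: (b - d).
Proof. by rewrite !scalerBr opprD addrACA. Qed.

Lemma comb_lt (R : realType) (V : normedModType R) (l rho : R) (a b c d : V) :
  0 <= l <= 1 -> `|a - c| < rho -> `|b - d| < rho ->
  `|l *: a + (1 - l) *: b - (l *: c + (1 - l) *: d)| < rho.
Proof.
move=> /andP[l0 l1] h1 h2; rewrite comb_id.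
apply: (le_lt_trans (ler_normD _ _)).
rewrite !normrZ (ger0_norm l0) (@ger0_norm _ (1 - l)); last by lra.
have := normr_ge0 (a - c); have := normr_ge0 (b - d).
have [lh|lh] := leP l (1/2); nra.
Qed.

Section Geo.
Variables (R : realType) (X : normedModType R) (f : X -> \bar R).
Hypothesis lsc : lower_semicontinuous f.
Hypothesis fcvx : convex_fun f.
Hypothesis fnm : forall x, f x != -oo%E.

Lemma fconv (y1 y2 : X) (t1 t2 l : R) : 0 <= l <= 1 ->
  (f y1 <= t1%:E)%E -> (f y2 <= t2%:E)%E ->
  (f (l *: y1 + (1 - l) *: y2)%R <= (l * t1 + (1 - l) * t2)%:E)%E.
Proof.
move=> /andP[l0 l1] h1 h2.
have [->|ln0] := eqVneq l 0.
  by rewrite scale0r add0r subr0 scale1r mul0r add0r mul1r.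
have [->|ln1] := eqVneq l 1.
  by rewrite subrr scale0r addr0 scale1r mul0r addr0 mul1r.
have lp : 0 < l by rewrite lt_neqAle eq_sym ln0.
have lq : l < 1 by rewrite lt_neqAle ln1.
apply: le_trans; first exact: (fcvx y1 y2 l lp lq).
move: h1 h2 (fnm y1) (fnm y2).
case: (f y1) => [F1| |] //; case: (f y2) => [F2| |] // h1 h2 _ _.
rewrite -!EFinM -EFinD lee_fin; rewrite !lee_fin in h1 h2; nra.
Qed.

Variables (x0 : X) (r d : R).
Hypothesis fx0 : f x0 = r%:E.
Hypothesis d0 : 0 < d.

Lemma subgrad_exists : exists s : dual X,
  forall y, ((s (y - x0) - d)%:E <= f y - f x0)%E.
Proof.
have [W nW Wf] : exists2 W, nbhs x0 W & forall y, W y -> ((r - d/2)%:E < f y)%E.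
  by apply: lsc; rewrite fx0 lte_fin; have := d0; lra.
move/nbhs_ballP : nW => [rho rho0 ballW].
have hball ey : `|ey| < rho -> ((r - d/2)%:E < f (x0 + ey)%R)%E.
  move=> h; apply: Wf; apply: ballW; rewrite -ball_normE /ball_ /=.
  by rewrite opprD addrA subrr add0r normrN.
pose eta := d / 2.
have eta0 : 0 < eta by rewrite /eta; have := d0; lra.
pose K (w : X * R) := exists ey et, (f (x0 + ey)%R <= (r + et)%:E)%E /\
   `|w.1 - ey| < rho /\ `|w.2 - et| < eta.
have K_small (w : X * R) : `|w.1| < rho -> `|w.2| < eta -> K w.
  move=> h1 h2; exists 0, 0; rewrite !subr0 addr0 fx0; split; [rewrite lee_fin; lra|by split].
have K_conv (a b : X * R) l : 0 <= l <= 1 -> K a -> K b -> K (l *: a + (1 - l) *: b).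
  move=> hl [e1 [t1 [f1 [n1 m1]]]] [e2 [t2 [f2 [n2 m2]]]].
  exists (l *: e1 + (1 - l) *: e2), (l * t1 + (1 - l) * t2); split; [|split].
  - have -> : x0 + (l *: e1 + (1 - l) *: e2) = l *: (x0 + e1) + (1 - l) *: (x0 + e2).
      rewrite !scalerDr addrACA -scalerDl.
      by rewrite [l + _]addrC subrK scale1r.
    have -> : r + (l * t1 + (1 - l) * t2) = l * (r + t1) + (1 - l) * (r + t2) by ring.
    exact: fconv.
  - exact: comb_lt.
  - exact: (@comb_lt R R^o).
pose S (w : X * R) := [set l : R | 0 < l /\ K (l^-1 *: w)].
pose p w := inf (S w).
have Smem (z : X * R) (m : R) : 0 < m -> `|z.1| < m * rho -> `|z.2| < m * eta -> S z m.
  move=> l0 h1 h2; split => //; apply: K_small => /=.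
    by rewrite normrZ gtr0_norm ?invr_gt0 // ltr_pdivrMl.
  by rewrite normrM gtr0_norm ?invr_gt0 // ltr_pdivrMl.
have Sne w : S w !=set0.
  set A := `|w.1|; set B := `|w.2|.
  have A0 : 0 <= A by apply: normr_ge0.
  have B0 : 0 <= B by apply: normr_ge0.
  have ci : 0 < rho^-1 + eta^-1 by apply: addr_gt0; rewrite invr_gt0.
  exists ((A + B + 1) * (rho^-1 + eta^-1)); apply: Smem.
  - by apply: mulr_gt0 => //; lra.
  - have e1 : (rho^-1 + eta^-1) * rho = 1 + eta^-1 * rho.
      by rewrite mulrDl mulVf ?gt_eqF.
    have e2 : 0 <= eta^-1 * rho by apply: mulr_ge0; rewrite ?invr_ge0 ltW.
    rewrite -mulrA e1 -/A; nra.
  - have e1 : (rho^-1 + eta^-1) * eta = rho^-1 * eta + 1.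
      by rewrite mulrDl [eta^-1 * _]mulVf ?gt_eqF.
    have e2 : 0 <= rho^-1 * eta by apply: mulr_ge0; rewrite ?invr_ge0 ltW.
    rewrite -mulrA e1 -/B; nra.
have Slb w : has_lbound (S w) by exists 0 => l [l0 _]; exact: ltW.
have pge0 w : 0 <= p w by apply: lb_le_inf => // l [l0 _]; exact: ltW.
have p_le w l : S w l -> p w <= l by move=> Sl; exact: ge_inf.
have phom a u : 0 < a -> a * p u <= p (a *: u).
  move=> a0; apply: lb_le_inf => // l [l0 Kl].
  have : p u <= l / a.
    apply: p_le; split; first by apply: divr_gt0.
    by rewrite invf_div scalerA mulrC in Kl *.
  move=> h; have := ler_pM2l a0 (p u) (l / a).
  by rewrite h mulrCA mulfV ?gt_eqF // mulr1 => /esym.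
have psub u w : p (u + w) <= p u + p w.
  have key l m : S u l -> S w m -> S (u + w) (l + m).
    move=> [l0 Ku] [m0 Kw]; split; first exact: addr_gt0.
    pose th := l / (l + m).
    have lm0 : 0 < l + m by exact: addr_gt0.
    have -> : (l + m)^-1 *: (u + w) = th *: (l^-1 *: u) + (1 - th) *: (m^-1 *: w).
      rewrite !scalerA.
      have -> : th * l^-1 = (l + m)^-1 by rewrite /th; field; apply/andP; split; rewrite gt_eqF.
      have -> : (1 - th) * m^-1 = (l + m)^-1.
        by rewrite /th; field; apply/andP; split; rewrite gt_eqF.
      by rewrite scalerDr.
    apply: K_conv => //; apply/andP; split.
      by rewrite /th divr_ge0 // ltW.
    by rewrite /th ler_pdivrMr // mul1r lerDl ltW.
  have h1 m : S w m -> p (u + w) - m <= p u.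
    move=> Sm; apply: lb_le_inf => // l Sl.
    have := p_le _ _ (key _ _ Sl Sm); lra.
  suff : p (u + w) - p u <= p w by lra.
  apply: lb_le_inf => // m Sm; have := h1 _ Sm; lra.
pose w0 : X * R := (0, - d).
have notK : ~ K w0.
  move=> [ey [et [fe [n1 n2]]]].
  move: n1; rewrite /w0 /= sub0r normrN => /hball hb.
  move: n2; rewrite /w0 /= ltr_norml => /andP[n2 _].
  have := lt_le_trans hb fe; rewrite lte_fin; rewrite /eta in n2; have := d0; lra.
have pw0 : 1 <= p w0.
  apply: lb_le_inf => // l [l0 Kl]; rewrite leNgt; apply/negP => l1; apply: notK.
  have K0 : K 0 by apply: K_small; rewrite /= normr0.
  have hl : 0 <= l <= 1 by rewrite ltW // ltW.
  have := K_conv _ _ l hl Kl K0.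
  by rewrite scalerA mulfV ?gt_eqF // scale1r scaler0 addr0.
have [L [Llin [Lp Lw0]]] := @hb R (X * R)%type p psub phom pge0 w0 pw0.
pose phi y := L (y, 0).
pose c := L (0, 1).
have Ldec y t : L (y, t) = t * c + phi y.
  have -> : (y, t) = t *: ((0 : X), (1 : R)) + (y, 0).
    by apply: injective_projections => /=; [rewrite scaler0 add0r|rewrite addr0; exact: (esym (mulr1 t))].
  by rewrite Llin.
have L00 : L 0 = 0 by have := Llin 1 0 0; rewrite scale1r addr0 mul1r; lra.
have phi0 : phi 0 = 0 by exact: L00.
have hc : - d * c = 1 by rewrite -Lw0 /w0 Ldec phi0 addr0.
have philin a u v : phi (a *: u + v) = a * phi u + phi v.
  rewrite /phi -Llin; congr L.
  by apply: injective_projections => /=; [|rewrite scaler0 addr0].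
have phiN u : phi (- u) = - phi u.
  by have := philin (-1) u 0; rewrite phi0 !addr0 scaleN1r mulN1r.
have phiB u v : phi (u - v) = phi u - phi v.
  by have := philin (-1) v u; rewrite scaleN1r mulN1r addrC => ->; rewrite addrC.
have phile y : phi y <= (`|y| + `|y|) / rho.
  have [->|yn] := eqVneq y 0; first by rewrite phi0 normr0 addr0 mul0r.
  have ny : 0 < `|y| by rewrite normr_gt0.
  have l0 : 0 < (`|y| + `|y|) / rho by apply: divr_gt0 => //; lra.
  apply: (le_trans (Lp (y, 0))); apply: p_le; apply: Smem => //=.
    by rewrite mulfVK ?gt_eqF //; lra.
  by rewrite normr0; apply: mulr_gt0.
have phiabs y : `|phi y| <= (`|y| + `|y|) / rho.
  rewrite ler_norml phile andbT; have := phile (- y).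
  by rewrite phiN normrN; lra.
have slin : forall (a : R) (u v : X), d * phi (a *: u + v) = a * (d * phi u) + d * phi v.
  by move=> a u v; rewrite philin; ring.
have scont : continuous (fun y => d * phi y).
  move=> z; apply/cvgrPdist_lt => e e0.
  have dd : 0 < 2 * d / rho by apply: divr_gt0 => //; have := d0; lra.
  pose dl := e * rho / (2 * d).
  have dl0 : 0 < dl by rewrite /dl; apply: divr_gt0; [apply: mulr_gt0|have := d0; lra].
  apply/nbhs_ballP; exists dl => // y; rewrite -ball_normE /= => hy.
  rewrite -mulrBr -phiB normrM (gtr0_norm d0).
  have := phiabs (z - y); set n := `|z - y| => hn.
  have e1 : (n + n) / rho * d = n * (2 * d / rho) by field; rewrite gt_eqF.
  have e2 : dl * (2 * d / rho) = e.
    by rewrite /dl; field; apply/andP; split; rewrite gt_eqF //; have := d0; lra.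
  have : n * (2 * d / rho) < dl * (2 * d / rho) by rewrite ltr_pM2r.
  rewrite -e1 e2 => h; have := d0; nra.
exists (@Dual R X (fun y => d * phi y) slin scont) => y /=.
have fyn := fnm y.
case E: (f y) fyn => [F| |] // _; last by rewrite fx0 /=; exact: leey.
rewrite fx0 -EFinB lee_fin.
have Se : S (y - x0, F - r) 1.
  split; first exact: ltr01.
  rewrite invr1 scale1r; exists (y - x0), (F - r); split; [|split].
  - by rewrite [x0 + _]addrC subrK E addrC subrK.
  - by rewrite /= subrr normr0.
  - by rewrite /= subrr normr0.
have := le_trans (Lp _) (p_le _ _ Se); rewrite Ldec => h.
have h' : d * ((F - r) * c + phi (y - x0)) <= d * 1 by rewrite ler_pM2l.
have dc : d * c = -1 by rewrite -hc mulNr opprK.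
move: h'; rewrite mulrDr mulrCA dc; lra.
Qed.
End Geo.

Section Main.
Variables (R : realType) (X : normedModType R).

Lemma dual0 (s : dual X) : s 0 = 0.
Proof. have := dfun_linear s 1 0 0; rewrite scale1r addr0 mul1r; lra. Qed.

Lemma dualB (s : dual X) u v : s (u - v) = s u - s v.
Proof.
have := dfun_linear s (-1) v u; rewrite scaleN1r mulN1r addrC => ->.
by rewrite addrC.
Qed.

Local Open Scope ereal_scope.
Variable f : X -> \bar R.

Lemma fconj_ge (s : dual X) y : (s y)%:E - f y <= fconj f s.
Proof. by apply: ereal_sup_ubound; exists y. Qed.

Lemma fconj_le (s : dual X) b : (forall y, (s y)%:E - f y <= b) -> fconj f s <= b.
Proof. by move=> h; apply: ge_ereal_sup => _ [y _ <-]; exact: h. Qed.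

Hypothesis fpr : proper_fun f.

Lemma fconj_nm (s : dual X) : fconj f s != -oo.
Proof.
case: fpr => [[x1 fx1] fnm]; have := fconj_ge s x1.
move: fx1 (fnm x1); case: (f x1) => [F1| |] // _ _.
by case: (fconj f s).
Qed.

End Main.

Local Open Scope ring_scope.
Theorem corollary3p1 (R : realType) (X : completeNormedModType R)
  (f : X -> \bar R) :
  reflexive_space X -> lower_semicontinuous f -> proper_fun f -> convex_fun f ->
  forall (eps : R) (x : X), 0 <= eps -> esubdiff f eps x = Tbreve (fFY f) eps x.
Proof.
move=> _ lsc fpr fcvx eps x eps0.
have fnm := fpr.2.
apply/seteqP; split => s /=.
- move=> [fx hs].
  case Ex : (f x) fx (fnm x) => [F| |] // _ _.
  have Cle : (fconj f s <= (s x + eps - F)%:E)%E.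
    apply: fconj_le => y; have := hs y; rewrite Ex.
    case: (f y) => [G| |] //=.
      by rewrite -!EFinB !lee_fin dualB; lra.
    by rewrite leNye.
  have Cge := @fconj_ge _ _ f s x; rewrite Ex in Cge.
  case EC : (fconj f s) Cle Cge => [C| |] // Cle Cge.
  rewrite !lee_fin in Cle Cge.
  rewrite /Tbreve /esubdiff2 /fFY /= Ex EC; split; first by rewrite -EFinD ltry.
  move=> [w ws] /=.
  have Dnm := @fconj_nm _ _ f fpr ws.
  have Dge := @fconj_ge _ _ f ws x; rewrite Ex in Dge.
  have Cge2 := @fconj_ge _ _ f s w; rewrite EC in Cge2.
  case Ew : (f w) (fnm w) Cge2 => [W| |] // _ Cge2; last first.
    by case: (fconj f ws) Dnm => [D| |] //= _; rewrite leey.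
  case ED : (fconj f ws) Dnm Dge => [D| |] // _ Dge; last by rewrite leey.
  rewrite !lee_fin in Dge Cge2; rewrite -!EFinD lee_fin !dualB; lra.
- rewrite /Tbreve /esubdiff2 /fFY /= => -[fin hyp].
  have Cnm := @fconj_nm _ _ f fpr s.
  case Ex : (f x) fin (fnm x) => [F| |] //; last by case: (fconj f s) Cnm.
  move=> fin _.
  case EC : (fconj f s) fin Cnm => [C| |] // _ _.
  have key : C + F <= s x + eps.
    have [//|lt] := leP (C + F) (s x + eps).
    pose d := C + F - s x - eps.
    have d0 : 0 < d by rewrite /d; lra.
    have [ws hws] := @subgrad_exists _ _ f lsc fcvx fnm x F d Ex d0.
    have Dle : (fconj f ws <= (ws x - F + d)%:E)%E.
      apply: fconj_le => y; have := hws y; rewrite Ex.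
      case: (f y) => [G| |] //=.
        by rewrite -!EFinB !lee_fin dualB; lra.
      by rewrite leNye.
    have Dge := @fconj_ge _ _ f ws x; rewrite Ex in Dge.
    case ED : (fconj f ws) Dle Dge => [D| |] // Dle Dge.
    rewrite !lee_fin in Dle Dge.
    have Cle : (fconj f s <= (2 * s x + 2 * eps + d - 2 * F - C)%:E)%E.
      apply: fconj_le => y; have := hyp (y, ws); rewrite /= ED Ex EC.
      case: (f y) (fnm y) => [G| |] //= _.
        by rewrite -!EFinD !lee_fin !dualB; lra.
      by rewrite addeNy leNye.
    rewrite EC lee_fin /d in Cle; lra.
  split; first by rewrite Ex ltry.
  move=> y; have Cge := @fconj_ge _ _ f s y; rewrite EC in Cge; rewrite Ex.
  case: (f y) Cge (fnm y) => [G| |] //= Cge _; last by rewrite leey.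
  rewrite lee_fin in Cge; rewrite -EFinB lee_fin dualB; lra.
Qed.
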